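(* Let $\mathbb{F}$ be a field and $\mathcal{C} \subseteq \mathbb{F}^{m \times n}$ a linear code with $\dim(\mathcal{C}) = mk$ for a positive integer $k$. The following are equivalent: (1) there exists a subspace $\mathcal{L} \subseteq \mathbb{F}^n$ with $\mathcal{C} = \mathcal{V}_\mathcal{L}$; (2) $d_{M,km}(\mathcal{C}) = k$; (3) $d_{M,r}(\mathcal{C}) = \lceil r/m \rceil$ for all $1 \leq r \leq mk$.
   Context: ${\rm Row}(V)$ is the row space. For a subspace $\mathcal{L} \subseteq \mathbb{F}^n$, $\mathcal{V}_\mathcal{L} = \{V \in \mathbb{F}^{m\times n} \mid {\rm Row}(V) \subseteq \mathcal{L}\}$, and $d_{M,r}(\mathcal{C}) = \min\{\dim \mathcal{L} \mid \mathcal{L} \subseteq \mathbb{F}^n \text{ subspace}, \dim(\mathcal{C} \cap \mathcal{V}_\mathcal{L}) \ge r\}$. *)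

(* Defs.v *)
From mathcomp Require Import all_boot all_order all_algebra.
Set Implicit Arguments. Unset Strict Implicit. Unset Printing Implicit Defensive.
Import GRing.Theory.
Local Open Scope ring_scope.

(* V_L = { V in F^{m x n} | Row(V) <= L }, as a subspace of 'M[F]_(m,n):
   the intersection over the rows i of the preimages of L under V |-> row i V. *)
Definition VL (F : fieldType) (m n : nat) (L : {vspace 'rV[F]_n}) : {vspace 'M[F]_(m, n)} :=
  (\bigcap_(i < m) (linfun (fun V : 'M[F]_(m, n) => row i V) @^-1: L))%VS.

Lemma memVL (F : fieldType) (m n : nat) (L : {vspace 'rV[F]_n}) (V : 'M[F]_(m, n)) :
  (V \in VL m L) = [forall i : 'I_m, row i V \in L].
Proof.
rewrite /VL memvE; apply/subv_bigcapP/forallP => H i.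
- by have := H i isT; rewrite -memvE -memv_preim lfunE.
- by move=> _; rewrite -memvE -memv_preim lfunE; exact: H.
Qed.

(* is_dMr C r d  <->  d = d_{M,r}(C) = min { dim L | dim (C :&: V_L) >= r }. *)
Definition dMr_cand (F : fieldType) (m n : nat) (C : {vspace 'M[F]_(m, n)}) (r d : nat) : Prop :=
  exists L : {vspace 'rV[F]_n}, \dim L = d /\ (r <= \dim (C :&: VL m L))%N.

Definition is_dMr (F : fieldType) (m n : nat) (C : {vspace 'M[F]_(m, n)}) (r d : nat) : Prop :=
  dMr_cand C r d /\ forall d', dMr_cand C r d' -> (d <= d')%N.

(* Main.v *)
Require Import Defs.
From mathcomp Require Import all_boot all_order all_algebra.
From mathcomp Require Import zify.
Set Implicit Arguments. Unset Strict Implicit. Unset Printing Implicit Defensive.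
Import GRing.Theory.

Section Aux.
Local Open Scope ring_scope.

Lemma dimVL (F : fieldType) (m n : nat) (L : {vspace 'rV[F]_n}) :
  \dim (VL m L) = (m * \dim L)%N.
Proof.
set d := \dim L; set b := vbasis L.
have bL : basis_of L b := vbasisP L.
pose B : 'M[F]_(d, n) := \matrix_(j < d) b`_j.
pose g : 'Hom('M[F]_(m, d), 'M[F]_(m, n)) := linfun (mulmxr B).
have rowg X i : row i (X *m B) = \sum_j X i j *: b`_j.
  by rewrite row_mul mulmx_sum_row; apply: eq_bigr => j _; rewrite rowK mxE.
have gE X : g X = X *m B by rewrite lfunE.
have inj : injective g.
  move=> X Y; rewrite !gE /= => /eqP; rewrite -subr_eq0 -mulmxBl => /eqP H.
  apply/matrixP => i j; apply/eqP; rewrite -subr_eq0; apply/eqP.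
  have /freeP FB := basis_free bL.
  have := FB (fun j => (X - Y) i j).
  rewrite -rowg H row0 => HH; have := HH erefl j; by rewrite !mxE => ->.
have -> : VL m L = (g @: fullv)%VS.
  apply/vspaceP => V; rewrite memVL; apply/forallP/memv_imgP.
  - move=> H; exists (\matrix_(i, j) coord b j (row i V)); first by rewrite memvf.
    rewrite gE; apply/row_matrixP => i; rewrite rowg.
    have Hi : row i V \in <<b>>%VS by rewrite (span_basis bL); exact: H.
    rewrite {1}(coord_span Hi); apply: eq_bigr => j _; by rewrite mxE.
  - case=> X _ -> i; rewrite gE rowg; apply: memv_suml => j _; apply: memvZ.
    apply: vbasis_mem; apply: mem_nth; by rewrite size_tuple.
rewrite limg_dim_eq ?dimvf ?dim_matrix //.
by rewrite capfv; apply/eqP/lker0P.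
Qed.

Lemma subdim (F : fieldType) (n : nat) (L : {vspace 'rV[F]_n}) (d : nat) :
  (d <= \dim L)%N -> exists L' : {vspace 'rV[F]_n}, (L' <= L)%VS /\ \dim L' = d.
Proof.
move=> dL; set b := vbasis L.
have bL : basis_of L b := vbasisP L.
exists <<take d b>>%VS; split.
  apply/span_subvP => v /mem_take; exact: vbasis_mem.
have fr : free (take d b).
  apply: (@catl_free _ _ (drop d b)); rewrite cat_take_drop; exact: basis_free bL.
by rewrite (eqP fr) size_take size_tuple; case: ltngtP dL.
Qed.

Lemma VLS (F : fieldType) (m n : nat) (L1 L2 : {vspace 'rV[F]_n}) :
  (L1 <= L2)%VS -> (VL m L1 <= VL m L2)%VS.
Proof.
move=> s; apply/subvP => V; rewrite !memVL => /forallP H; apply/forallP => i.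
exact: (subvP s _ (H i)).
Qed.
End Aux.

Theorem proposition16 (F : fieldType) (m n : nat) (C : {vspace 'M[F]_(m, n)}) (k : nat) :
  (0 < m)%N -> (0 < k)%N -> \dim C = (m * k)%N ->
  ((exists L : {vspace 'rV[F]_n}, C = VL m L) <-> is_dMr C (k * m) k) /\
  (is_dMr C (k * m) k <->
   (forall r : nat, (1 <= r <= m * k)%N -> is_dMr C r ((r + m - 1) %/ m)%N)).
Proof.
move=> m0 k0 dC.
have lb r d' : dMr_cand C r d' -> (r <= m * d')%N.
  case=> L' [<- H]; apply: (leq_trans H); rewrite -dimVL; apply: dimvS; exact: capvSr.
have dimL L : C = VL m L -> \dim L = k.
  move=> eC; move: dC; rewrite eC dimVL => /eqP; rewrite eqn_pmul2l //; exact/eqP.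
have A12 : (exists L, C = VL m L) -> is_dMr C (k * m) k.
  case=> L eC; have dL := dimL L eC; split.
    by exists L; split => //; rewrite -eC capvv dC mulnC.
  move=> d' /lb; rewrite mulnC leq_pmul2l //.
have A21 : is_dMr C (k * m) k -> exists L, C = VL m L.
  case=> [[L [dL H]] _]; exists L.
  have sub : (C <= VL m L)%VS.
    have : (C :&: VL m L)%VS == C by rewrite eqEdim capvSl dC mulnC.
    move/eqP => E; rewrite -E; exact: capvSr.
  by apply/eqP; rewrite eqEdim sub dimVL dL dC leqnn.
have A23 : (exists L, C = VL m L) ->
    forall r, (1 <= r <= m * k)%N -> is_dMr C r ((r + m - 1) %/ m).
  case=> L eC; have dL := dimL L eC => r /andP[r1 rmk].
  have dm := divn_eq (r + m - 1) m; have md := ltn_pmod (r + m - 1) m0.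
  set d := (r + m - 1) %/ m in dm *.
  have dk : (d <= k)%N by rewrite -ltnS ltn_divLR //; nia.
  split.
    have := @subdim F n L d; rewrite dL => /(_ dk) [L' [sL' dL']].
    exists L'; split => //.
    have -> : (C :&: VL m L')%VS = VL m L'.
      by apply/capv_idPr; rewrite eC; exact: VLS.
    rewrite dimVL dL'; nia.
  move=> d' /lb H; rewrite -ltnS ltn_divLR //; nia.
split; first by split.
split.
  by move=> H; apply: A23; apply: A21.
move=> H; have := H (m * k)%N.
have -> : ((m * k + m - 1) %/ m = k)%N.
  rewrite -addnBA // mulnC divnMDl // divn_small ?addn0 //; lia.
rewrite mulnC; apply; apply/andP; split => //; nia.
Qed.
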